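(* Let $\Omega\subset\mathbb{R}^3$ be a domain, $q\in C(\Omega,\mathbb{C})$, and let $\mathbf Q_1,\mathbf Q_2,\mathbf Q_3,\mathbf Q_4$ be four solutions of the same Riccati equation $D\mathbf Q+|\mathbf Q|^2=q$ in $\Omega$ such that the differences $\mathbf Q_1-\mathbf Q_2$, $\mathbf Q_3-\mathbf Q_4$, $\mathbf Q_1-\mathbf Q_4$, $\mathbf Q_3-\mathbf Q_2$ are invertible in $\mathbb{H}(\mathbb{C})$ at every point. Then $$\frac{D(\mathbf Q_1-\mathbf Q_2)-2(\mathbf Q_1\times\mathbf Q_2)}{\mathbf Q_1-\mathbf Q_2}+\frac{D(\mathbf Q_3-\mathbf Q_4)-2(\mathbf Q_3\times\mathbf Q_4)}{\mathbf Q_3-\mathbf Q_4}-\frac{D(\mathbf Q_1-\mathbf Q_4)-2(\mathbf Q_1\times\mathbf Q_4)}{\mathbf Q_1-\mathbf Q_4}-\frac{D(\mathbf Q_3-\mathbf Q_2)-2(\mathbf Q_3\times\mathbf Q_2)}{\mathbf Q_3-\mathbf Q_2}=\mathbf 0,$$ where $\frac{a}{b}$ denotes $a\,b^{-1}$ (right division).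
   Context: $\mathbb{H}(\mathbb{C})$ denotes the complex quaternions: elements $x=\sum_{\ell=0}^3x_\ell e_\ell$ with $x_\ell\in\mathbb{C}$, $e_0=1$, $e_pe_q=-\delta_{pq}+\varepsilon_{pqr}e_r$ for $p,q,r\in\{1,2,3\}$, and $i$ commuting with all $e_\ell$; the product of vectors is $\mathbf x\mathbf y=-\langle\mathbf x,\mathbf y\rangle+\mathbf x\times\mathbf y$ with $\langle\cdot,\cdot\rangle$, $\times$ the standard bilinear inner and cross products on $\mathbb{C}^3$. An element $x$ is invertible iff $x\overline x=\sum_\ell x_\ell^2\neq0$, where $\overline{x}=x_0-\mathbf x$. For a vector $\mathbf Q$, $|\mathbf Q|^2=-\mathbf Q^2=\sum_jQ_j^2$. The Dirac operator is $D\varphi=\sum_{k=1}^3e_k\partial_k\varphi$. Solutions of the Riccati equation are $\mathbf Q\in C^1(\Omega,\mathrm{Vec}\,\mathbb{H}(\mathbb{C}))$. *)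

(* Defs.v *)
From Stdlib Require Import Reals Lra ClassicalEpsilon.
Open Scope R_scope.

Record Cx := mkC { re : R; im : R }.
Definition C0 : Cx := mkC 0 0.
Definition Cr (r : R) : Cx := mkC r 0.
Definition Cadd (a b : Cx) : Cx := mkC (re a + re b) (im a + im b).
Definition Copp (a : Cx) : Cx := mkC (- re a) (- im a).
Definition Csub (a b : Cx) : Cx := Cadd a (Copp b).
Definition Cmul (a b : Cx) : Cx :=
  mkC (re a * re b - im a * im b) (re a * im b + im a * re b).
Definition Cinv (a : Cx) : Cx :=
  mkC (re a / (re a * re a + im a * im a)) (- im a / (re a * re a + im a * im a)).
Definition Cmod (a : Cx) : R := sqrt (re a * re a + im a * im a).

Record HC := mkH { h0 : Cx; h1 : Cx; h2 : Cx; h3 : Cx }.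
Definition H0 : HC := mkH C0 C0 C0 C0.
Definition Hadd (x y : HC) : HC :=
  mkH (Cadd (h0 x) (h0 y)) (Cadd (h1 x) (h1 y)) (Cadd (h2 x) (h2 y)) (Cadd (h3 x) (h3 y)).
Definition Hopp (x : HC) : HC := mkH (Copp (h0 x)) (Copp (h1 x)) (Copp (h2 x)) (Copp (h3 x)).
Definition Hsub (x y : HC) : HC := Hadd x (Hopp y).
Definition Hscal (c : Cx) (x : HC) : HC :=
  mkH (Cmul c (h0 x)) (Cmul c (h1 x)) (Cmul c (h2 x)) (Cmul c (h3 x)).
(* product: e_p e_q = -delta_pq + eps_pqr e_r, i commutes with e_l *)
Definition Hmul (x y : HC) : HC :=
  let a0 := h0 x in let a1 := h1 x in let a2 := h2 x in let a3 := h3 x in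
  let b0 := h0 y in let b1 := h1 y in let b2 := h2 y in let b3 := h3 y in
  mkH (Csub (Csub (Csub (Cmul a0 b0) (Cmul a1 b1)) (Cmul a2 b2)) (Cmul a3 b3))
      (Cadd (Cadd (Cmul a0 b1) (Cmul a1 b0)) (Csub (Cmul a2 b3) (Cmul a3 b2)))
      (Cadd (Cadd (Cmul a0 b2) (Cmul a2 b0)) (Csub (Cmul a3 b1) (Cmul a1 b3)))
      (Cadd (Cadd (Cmul a0 b3) (Cmul a3 b0)) (Csub (Cmul a1 b2) (Cmul a2 b1))).
Definition Hconj (x : HC) : HC := mkH (h0 x) (Copp (h1 x)) (Copp (h2 x)) (Copp (h3 x)).
(* x * conj x = sum_l x_l^2 *)
Definition Hnorm2 (x : HC) : Cx :=
  Cadd (Cadd (Cadd (Cmul (h0 x) (h0 x)) (Cmul (h1 x) (h1 x))) (Cmul (h2 x) (h2 x)))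
       (Cmul (h3 x) (h3 x)).
Definition Hinvertible (x : HC) : Prop := Hnorm2 x <> C0.
Definition Hinv (x : HC) : HC := Hscal (Cinv (Hnorm2 x)) (Hconj x).
Definition Hrdiv (a b : HC) : HC := Hmul a (Hinv b).
Definition Hsc (c : Cx) : HC := mkH c C0 C0 C0.
Definition e1 : HC := mkH C0 (Cr 1) C0 C0.
Definition e2 : HC := mkH C0 C0 (Cr 1) C0.
Definition e3 : HC := mkH C0 C0 C0 (Cr 1).

Record V3 := mkV { v1 : Cx; v2 : Cx; v3 : Cx }.
Definition vec (v : V3) : HC := mkH C0 (v1 v) (v2 v) (v3 v).
Definition Vsub (a b : V3) : V3 := mkV (Csub (v1 a) (v1 b)) (Csub (v2 a) (v2 b)) (Csub (v3 a) (v3 b)).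
Definition Vcross (a b : V3) : V3 :=
  mkV (Csub (Cmul (v2 a) (v3 b)) (Cmul (v3 a) (v2 b)))
      (Csub (Cmul (v3 a) (v1 b)) (Cmul (v1 a) (v3 b)))
      (Csub (Cmul (v1 a) (v2 b)) (Cmul (v2 a) (v1 b))).
(* |Q|^2 = sum_j Q_j^2 (complex, bilinear) *)
Definition Vnorm2 (a : V3) : Cx :=
  Cadd (Cadd (Cmul (v1 a) (v1 a)) (Cmul (v2 a) (v2 a))) (Cmul (v3 a) (v3 a)).

Record P3 := mkP { x1 : R; x2 : R; x3 : R }.
Definition dist3 (x y : P3) : R :=
  sqrt ((x1 x - x1 y)^2 + (x2 x - x2 y)^2 + (x3 x - x3 y)^2).
Definition is_open (U : P3 -> Prop) : Prop :=
  forall x, U x -> exists r, 0 < r /\ forall y, dist3 x y < r -> U y.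
Definition is_connected (O : P3 -> Prop) : Prop :=
  forall U V : P3 -> Prop, is_open U -> is_open V ->
    (forall x, O x -> U x \/ V x) ->
    (forall x, O x -> U x -> V x -> False) ->
    (exists x, O x /\ U x) -> (exists x, O x /\ V x) -> False.
Definition is_domain (O : P3 -> Prop) : Prop :=
  (exists x, O x) /\ is_open O /\ is_connected O.

Definition Rcont_on (O : P3 -> Prop) (f : P3 -> R) : Prop :=
  forall x, O x -> forall eps, 0 < eps -> exists d, 0 < d /\
    forall y, O y -> dist3 x y < d -> Rabs (f y - f x) < eps.
Definition Ccont_on (O : P3 -> Prop) (f : P3 -> Cx) : Prop :=
  forall x, O x -> forall eps, 0 < eps -> exists d, 0 < d /\
    forall y, O y -> dist3 x y < d -> Cmod (Csub (f y) (f x)) < eps.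

Inductive Idx := I1 | I2 | I3.
Definition shift (x : P3) (k : Idx) (t : R) : P3 :=
  match k with
  | I1 => mkP (x1 x + t) (x2 x) (x3 x)
  | I2 => mkP (x1 x) (x2 x + t) (x3 x)
  | I3 => mkP (x1 x) (x2 x) (x3 x + t)
  end.
Definition has_partial (f : P3 -> R) (k : Idx) (x : P3) (l : R) : Prop :=
  derivable_pt_lim (fun t => f (shift x k t)) 0 l.
(* the partial derivative (chosen value when it exists) *)
Definition pd (f : P3 -> R) (k : Idx) (x : P3) : R :=
  epsilon (inhabits 0) (fun l => has_partial f k x l).
Definition Cpd (f : P3 -> Cx) (k : Idx) (x : P3) : Cx :=
  mkC (pd (fun y => re (f y)) k x) (pd (fun y => im (f y)) k x).
Definition Hpd (f : P3 -> HC) (k : Idx) (x : P3) : HC :=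
  mkH (Cpd (fun y => h0 (f y)) k x) (Cpd (fun y => h1 (f y)) k x)
      (Cpd (fun y => h2 (f y)) k x) (Cpd (fun y => h3 (f y)) k x).
Definition Dirac (f : P3 -> HC) (x : P3) : HC :=
  Hadd (Hadd (Hmul e1 (Hpd f I1 x)) (Hmul e2 (Hpd f I2 x))) (Hmul e3 (Hpd f I3 x)).
Definition DiracV (Q : P3 -> V3) (x : P3) : HC := Dirac (fun y => vec (Q y)) x.

Definition RC1_on (O : P3 -> Prop) (f : P3 -> R) : Prop :=
  (forall x k, O x -> exists l, has_partial f k x l) /\
  (forall k, Rcont_on O (pd f k)) /\ Rcont_on O f.
Definition VC1_on (O : P3 -> Prop) (Q : P3 -> V3) : Prop :=
  RC1_on O (fun y => re (v1 (Q y))) /\ RC1_on O (fun y => im (v1 (Q y))) /\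
  RC1_on O (fun y => re (v2 (Q y))) /\ RC1_on O (fun y => im (v2 (Q y))) /\
  RC1_on O (fun y => re (v3 (Q y))) /\ RC1_on O (fun y => im (v3 (Q y))).

Definition riccati_sol (O : P3 -> Prop) (q : P3 -> Cx) (Q : P3 -> V3) : Prop :=
  VC1_on O Q /\
  forall x, O x -> Hadd (DiracV Q x) (Hsc (Vnorm2 (Q x))) = Hsc (q x).

Definition term (Qa Qb : P3 -> V3) (x : P3) : HC :=
  Hrdiv (Hsub (DiracV (fun y => Vsub (Qa y) (Qb y)) x)
              (Hscal (Cr 2) (vec (Vcross (Qa x) (Qb x)))))
        (vec (Vsub (Qa x) (Qb x))).

(* Main.v *)
Require Import Defs.
From Stdlib Require Import Reals Lra ClassicalEpsilon.
Open Scope R_scope.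

Ltac dall := repeat match goal with
  | c : Cx |- _ => destruct c
  | h : HC |- _ => destruct h
  | v : V3 |- _ => destruct v end.
Ltac crush := dall; cbv [Hmul Hadd Hsub Hopp Hscal Hconj Hsc Hnorm2 Hinv
  vec Vsub Vcross Vnorm2 Cadd Csub Copp Cmul Cr C0 H0 h0 h1 h2 h3 re im v1 v2 v3] in *;
  repeat match goal with
  | |- mkH _ _ _ _ = mkH _ _ _ _ => f_equal
  | |- mkC _ _ = mkC _ _ => f_equal
  | |- mkV _ _ _ = mkV _ _ _ => f_equal end; ring.

Lemma L_assoc (P U W : HC) (c : Cx) :
  Hmul (Hmul P U) (Hscal c W) = Hscal c (Hmul P (Hmul U W)).
Proof. crush. Qed.
Lemma L_conj (U : HC) : Hmul U (Hconj U) = Hsc (Hnorm2 U).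
Proof. crush. Qed.
Lemma L_sc (P : HC) (n : Cx) : Hmul P (Hsc n) = Hscal n P.
Proof. crush. Qed.
Lemma L_scsc (P : HC) (c n : Cx) : Hscal c (Hscal n P) = Hscal (Cmul c n) P.
Proof. crush. Qed.
Lemma L_one (P : HC) : Hscal (Cr 1) P = P.
Proof. crush. Qed.
Lemma L_inv (n : Cx) : n <> C0 -> Cmul (Cinv n) n = Cr 1.
Proof.
  destruct n as [a b]; intro H.
  assert (a * a + b * b <> 0).
  { intro E. apply H. unfold C0.
    assert (a = 0) by nra. assert (b = 0) by nra. subst; reflexivity. }
  unfold Cmul, Cinv, Cr; cbn. f_equal; field; auto.
Qed.
Lemma L_rdiv (P U : HC) : Hinvertible U -> Hrdiv (Hmul P U) U = P.
Proof.
  intro H. unfold Hrdiv, Hinv. rewrite L_assoc, L_conj, L_sc, L_scsc, L_inv; auto.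
  apply L_one.
Qed.

Lemma L_pd (f : P3 -> R) k x l : has_partial f k x l -> pd f k x = l.
Proof.
  intro H. unfold pd.
  pose proof (epsilon_spec (inhabits 0) (fun l => has_partial f k x l) (ex_intro _ l H)).
  eapply uniqueness_limite; eauto.
Qed.
Lemma L_pd_sub (f g : P3 -> R) k x :
  (exists l, has_partial f k x l) -> (exists l, has_partial g k x l) ->
  pd (fun y => f y + - g y) k x = pd f k x + - pd g k x.
Proof.
  intros [l1 H1] [l2 H2]. rewrite (L_pd _ _ _ _ H1), (L_pd _ _ _ _ H2).
  apply L_pd. unfold has_partial in *.
  apply (derivable_pt_lim_plus _ (fun t => - g (shift x k t))); auto.
  apply (derivable_pt_lim_opp (fun t => g (shift x k t))); auto.
Qed.
Lemma L_pd_const k x : pd (fun _ => 0) k x = 0.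
Proof. apply L_pd. unfold has_partial. apply derivable_pt_lim_const. Qed.

Lemma L_solve (D S T : HC) : Hadd D S = T -> D = Hsub T S.
Proof. intro E; subst. crush. Qed.

Lemma L_num (a b : V3) (qx : Cx) :
  Hsub (Hsub (Hsub (Hsc qx) (Hsc (Vnorm2 a))) (Hsub (Hsc qx) (Hsc (Vnorm2 b))))
       (Hscal (Cr 2) (vec (Vcross a b)))
  = Hmul (Hadd (vec a) (vec b)) (vec (Vsub a b)).
Proof. crush. Qed.

Lemma L_final (a b c d : HC) :
  Hsub (Hsub (Hadd (Hadd a b) (Hadd c d)) (Hadd a d)) (Hadd c b) = H0.
Proof. unfold H0. crush. Qed.

Definition partials (O : P3 -> Prop) (Q : P3 -> V3) x :=
  forall k, (exists l, has_partial (fun y => re (v1 (Q y))) k x l) /\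
            (exists l, has_partial (fun y => im (v1 (Q y))) k x l) /\
            (exists l, has_partial (fun y => re (v2 (Q y))) k x l) /\
            (exists l, has_partial (fun y => im (v2 (Q y))) k x l) /\
            (exists l, has_partial (fun y => re (v3 (Q y))) k x l) /\
            (exists l, has_partial (fun y => im (v3 (Q y))) k x l).

Lemma L_partials O Q x : VC1_on O Q -> O x -> partials O Q x.
Proof.
  intros (A1 & A2 & A3 & A4 & A5 & A6) Ox k.
  destruct A1 as [B1 _]; destruct A2 as [B2 _]; destruct A3 as [B3 _];
  destruct A4 as [B4 _]; destruct A5 as [B5 _]; destruct A6 as [B6 _].
  repeat split; auto.
Qed.

Lemma L_Dsub O Qa Qb x : partials O Qa x -> partials O Qb x ->
  DiracV (fun y => Vsub (Qa y) (Qb y)) x = Hsub (DiracV Qa x) (DiracV Qb x).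
Proof.
  intros Pa Pb.
  assert (E : forall k, Hpd (fun y => vec (Vsub (Qa y) (Qb y))) k x =
                   Hsub (Hpd (fun y => vec (Qa y)) k x) (Hpd (fun y => vec (Qb y)) k x)).
  { intro k. destruct (Pa k) as (a1&a2&a3&a4&a5&a6).
    destruct (Pb k) as (b1&b2&b3&b4&b5&b6).
    unfold Hpd, Cpd, Hsub, Hadd, Hopp, Cadd, Copp, vec, Vsub, Csub, C0. cbn.
    rewrite !L_pd_sub by auto. rewrite !L_pd_const. f_equal; f_equal; ring. }
  unfold DiracV, Dirac. rewrite !E. crush.
Qed.

Lemma L_term O q Qa Qb x : riccati_sol O q Qa -> riccati_sol O q Qb -> O x ->
  Hinvertible (vec (Vsub (Qa x) (Qb x))) ->
  term Qa Qb x = Hadd (vec (Qa x)) (vec (Qb x)).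
Proof.
  intros [Ca Ra] [Cb Rb] Ox Hi. unfold term.
  rewrite (L_Dsub O) by (eapply L_partials; eauto).
  rewrite (L_solve _ _ _ (Ra x Ox)), (L_solve _ _ _ (Rb x Ox)).
  rewrite L_num. apply L_rdiv; auto.
Qed.

Theorem theorem4 (O : P3 -> Prop) (q : P3 -> Cx) (Q1 Q2 Q3 Q4 : P3 -> V3) :
  is_domain O ->
  Ccont_on O q ->
  riccati_sol O q Q1 -> riccati_sol O q Q2 ->
  riccati_sol O q Q3 -> riccati_sol O q Q4 ->
  (forall x, O x -> Hinvertible (vec (Vsub (Q1 x) (Q2 x)))) ->
  (forall x, O x -> Hinvertible (vec (Vsub (Q3 x) (Q4 x)))) ->
  (forall x, O x -> Hinvertible (vec (Vsub (Q1 x) (Q4 x)))) ->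
  (forall x, O x -> Hinvertible (vec (Vsub (Q3 x) (Q2 x)))) ->
  forall x, O x ->
    Hsub (Hsub (Hadd (term Q1 Q2 x) (term Q3 Q4 x)) (term Q1 Q4 x)) (term Q3 Q2 x)
    = H0.
Proof.
  intros _ _ S1 S2 S3 S4 I12 I34 I14 I32 x Ox.
  rewrite (L_term O q Q1 Q2), (L_term O q Q3 Q4), (L_term O q Q1 Q4), (L_term O q Q3 Q2);
    auto.
  apply L_final.
Qed.
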